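(* Let $A$ be an invertible $n$-by-$n$ doubly nonnegative matrix with sign change matrix $W=[w_{ij}]$. For indices $i,j$ let $T^-_{ij}=\{t>1:(A^t)_{ij}<0\}$. Then the number of connected components of $T^-_{ij}$ is at most $\lfloor (w_{ij}-1)/2\rfloor$ if $w_{ij}>0$, and is $0$ if $w_{ij}=0$.
   Context: A real matrix is doubly nonnegative if it is symmetric, positive semidefinite, and entry-wise nonnegative. Write $A=UDU^T$ with $U=[u_{ij}]$ real orthogonal and $D=\mathrm{diag}(\lambda_1,\dots,\lambda_n)$, $\lambda_1\ge\cdots\ge\lambda_n$; for real $t$ (here $\lambda_i>0$), $A^t=UD^tU^T$, so $(A^t)_{ij}=\sum_k u_{ik}u_{jk}\lambda_k^t$ is an exponential polynomial in $t$. The sign change matrix $W=[w_{ij}]$ has $w_{ij}$ equal to the number of sign changes in the coefficient sequence $(u_{i1}u_{j1},\dots,u_{in}u_{jn})$, arranged in decreasing order of the corresponding eigenvalues (zeros ignored). *)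

(* Defs.v *)
From HB Require Import structures.
From mathcomp Require Import all_boot all_order all_algebra.
From mathcomp Require Import all_classical all_reals all_analysis.
Set Implicit Arguments. Unset Strict Implicit. Unset Printing Implicit Defensive.
Import Order.TTheory GRing.Theory Num.Theory.
Import numFieldNormedType.Exports.
Local Open Scope ring_scope.
Local Open Scope classical_set_scope.

Definition sign_changes {R : realDomainType} (s : seq R) : nat :=
  let s' := [seq x <- s | x != 0] in
  count (fun p : R * R => p.1 * p.2 < 0) (zip s' (behead s')).

Definition doubly_nonnegative {R : realFieldType} (n : nat) (A : 'M[R]_n) : Prop :=
  [/\ A^T = A,
      (forall x : 'cV[R]_n, 0 <= (x^T *m A *m x) ord0 ord0)
    & (forall i j, 0 <= A i j)].

(* w_ij : sign changes of (u_i1 u_j1, ..., u_in u_jn), columns of U ordered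
   by decreasing eigenvalues *)
Definition sign_change_entry {R : realDomainType} (n : nat) (U : 'M[R]_n)
  (i j : 'I_n) : nat :=
  sign_changes [seq U i k * U j k | k <- enum 'I_n].

(* (A^t)_ij = sum_k u_ik u_jk lambda_k^t  for A = U diag(lambda) U^T *)
Definition mxpowR_entry {R : realType} (n : nat) (U : 'M[R]_n)
  (lam : 'I_n -> R) (t : R) (i j : 'I_n) : R :=
  \sum_(k < n) U i k * U j k * (lam k `^ t).

Definition components {T : topologicalType} (S : set T) : set (set T) :=
  [set C | exists2 x, S x & C = connected_component S x].

(* Main.v *)
Require Import Defs.
From HB Require Import structures.
From mathcomp Require Import all_boot all_order all_algebra.
From mathcomp Require Import all_classical all_reals all_analysis.
From mathcomp Require Import lra zify.
Import Order.TTheory GRing.Theory Num.Theory.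
Import numFieldNormedType.Exports.
Local Open Scope ring_scope.
Local Open Scope classical_set_scope.

Section Aux.
Variable R : realType.

Implicit Types x y z : R.

Lemma sg1 {x y z} : x * y < 0 -> 0 < y * z -> x * z < 0.
Proof. move=> h1 h2. have : (x*y)*(y*z) < 0 by rewrite pmulr_llt0. nra. Qed.
Lemma sg2 {x y z} : x * y < 0 -> y * z < 0 -> 0 < x * z.
Proof. move=> h1 h2. have : 0 < (x*y)*(y*z) by rewrite nmulr_rgt0. nra. Qed.
Lemma sg3 {x y z} : 0 < x * y -> 0 < y * z -> 0 < x * z.
Proof. move=> h1 h2. have : 0 < (x*y)*(y*z) by rewrite mulr_gt0. nra. Qed.
Lemma sg4 {x y z} : x * y < 0 -> 0 <= y * z -> z != 0 -> x * z < 0.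
Proof.
move=> h1 h2 hz; have hy : y != 0 by apply/eqP=> y0; move: h1; rewrite y0 mulr0 ltxx.
apply: (sg1 h1); rewrite lt_neqAle h2 andbT eq_sym mulf_neq0 //.
Qed.
Lemma sqn x : (x * x < 0) = false.
Proof. by rewrite ltNge -expr2 sqr_ge0. Qed.
Lemma neg_neq0l {x y} : x * y < 0 -> x != 0.
Proof. by apply: contraTneq => ->; rewrite mul0r ltxx. Qed.
Lemma neg_neq0r {x y} : x * y < 0 -> y != 0.
Proof. by apply: contraTneq => ->; rewrite mulr0 ltxx. Qed.

Definition altc (n : nat) (c : nat -> R) (S : nat) :=
  exists idx : nat -> nat, [/\ (forall j, (j < S)%N -> (idx j < idx j.+1)%N),
    (idx S < n)%N & (forall j, (j < S)%N -> c (idx j) * c (idx j.+1) < 0)].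

Lemma chain_mono (idx : nat -> nat) S : (forall j, (j < S)%N -> (idx j < idx j.+1)%N) ->
  forall i j, (i <= j <= S)%N -> (idx i <= idx j)%N.
Proof.
move=> hi i j /andP[hij hjS]; elim: j hij hjS => [|j IH] hij hjS.
  by rewrite leqn0 in hij; rewrite (eqP hij).
case: (ltngtP i j.+1) hij => // [hlt _|-> //].
apply: leq_trans (IH _ (ltnW hjS)) (ltnW (hi _ hjS)); by [].
Qed.

Lemma comb n (c mm : nat -> R) a b S : (a < b)%N -> (b < n)%N -> c a * c b < 0 ->
  (forall q, (a < q < b)%N -> c q = 0) -> (forall q, (q <= a)%N -> 0 <= mm q) ->
  (forall q, (b <= q < n)%N -> mm q <= 0) ->
  altc n (fun k => c k * mm k) S -> altc n c S.+1.
Proof.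
move=> hab hbn hcab hmid hpos hneg [idx [hinc hS hprod]].
case: S hinc hS hprod => [|S] hinc hS hprod.
  exists (fun j => if j == 0%N then a else b); split => //.
  - by case.
  - by case => //.
have mono := @chain_mono idx _ hinc.
have hlt j : (j <= S.+1)%N -> (idx j < n)%N.
  by move=> hj; apply: leq_ltn_trans hS; apply: mono; rewrite hj leqnn.
have hnz j : (j <= S.+1)%N -> c (idx j) * mm (idx j) != 0.
  move=> hj; case: (ltnP j S.+1) => hjS.
    exact: (neg_neq0l (hprod _ hjS)).
  have -> : j = S.+1 by apply/eqP; rewrite eqn_leq hj hjS.
  exact: (neg_neq0r (hprod _ (ltnSn S))).
have hside j : (j <= S.+1)%N -> ((idx j <= a)%N -> 0 < mm (idx j)) /\
     ((a < idx j)%N -> mm (idx j) < 0 /\ (b <= idx j)%N).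
  move=> hj; have := hnz _ hj; rewrite mulf_eq0 negb_or => /andP[hc hm].
  split => [ha|ha].
    by rewrite lt_neqAle eq_sym hm hpos.
  have hb : (b <= idx j)%N.
    rewrite leqNgt; apply/negP => hb; move/eqP: hc; apply; apply: hmid.
    by rewrite ha hb.
  split=> //; rewrite lt_neqAle hm /=; apply: (hneg (idx j)); by rewrite hb (hlt _ hj).
have hcnz j : (j <= S.+1)%N -> c (idx j) != 0.
  by move=> hj; have := hnz _ hj; rewrite mulf_eq0 negb_or => /andP[].
have hca : c a != 0 := neg_neq0l hcab.
have hcb : c b != 0 := neg_neq0r hcab.
pose P := fun j => (S.+1 < j)%N || (a < idx j)%N.
have exP : exists j, P j by exists S.+2; rewrite /P ltnSn.
pose r := ex_minn exP.
have hPr : P r by rewrite /r; case: ex_minnP.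
have hmin j : P j -> (r <= j)%N by rewrite /r; case: ex_minnP => ? _ ; apply.
have hr : (r <= S.+2)%N by apply: hmin; rewrite /P ltnSn.
have hbefore j : (j < r)%N -> (j <= S.+1)%N /\ (idx j <= a)%N.
  move=> hjr; have : ~~ P j by apply/negP => /hmin; rewrite leqNgt hjr.
  by rewrite /P negb_or -!leqNgt => /andP[].
have hafter j : (r <= j <= S.+1)%N -> (a < idx j)%N.
  move=> /andP[hrj hj]; have hrS : (r <= S.+1)%N by apply: leq_trans hj.
  have : (a < idx r)%N by move: hPr; rewrite /P ltnNge hrS.
  move=> h; apply: leq_trans h _; apply: mono; by rewrite hrj hj.
have pos2 i j : (i <= S.+1)%N -> (j <= S.+1)%N -> (idx i <= a)%N -> (idx j <= a)%N ->
   c (idx i) * mm (idx i) * (c (idx j) * mm (idx j)) < 0 -> c (idx i) * c (idx j) < 0.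
  move=> hi hj hai haj h.
  have mi := (hside _ hi).1 hai; have mj := (hside _ hj).1 haj.
  have : 0 < mm (idx i) * mm (idx j) by rewrite mulr_gt0.
  nra.
have neg2 i j : (i <= S.+1)%N -> (j <= S.+1)%N -> (a < idx i)%N -> (a < idx j)%N ->
   c (idx i) * mm (idx i) * (c (idx j) * mm (idx j)) < 0 -> c (idx i) * c (idx j) < 0.
  move=> hi hj hai haj h.
  have mi := ((hside _ hi).2 hai).1; have mj := ((hside _ hj).2 haj).1.
  have : 0 < mm (idx i) * mm (idx j) by rewrite nmulr_rgt0.
  nra.
have mixed i j : (i <= S.+1)%N -> (j <= S.+1)%N -> (idx i <= a)%N -> (a < idx j)%N ->
   c (idx i) * mm (idx i) * (c (idx j) * mm (idx j)) < 0 -> 0 < c (idx i) * c (idx j).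
  move=> hi hj hai haj h.
  have mi := (hside _ hi).1 hai; have mj := ((hside _ hj).2 haj).1.
  have : mm (idx i) * mm (idx j) < 0 by rewrite pmulr_rlt0.
  nra.
have hu r0 : (0 < r0)%N -> (r0 <= r)%N -> (r0 <= S.+2)%N -> (r0.-1 <= S.+1)%N /\ (idx r0.-1 <= a)%N.
  move=> h0 h1 h2; have : (r0.-1 < r)%N by apply: leq_trans h1; rewrite prednK.
  by move/hbefore.
have [e [E1 E2 E3]] : exists e, [/\ (0 < r)%N -> (idx r.-1 < e)%N /\ c (idx r.-1) * c e < 0,
    (r <= S.+1)%N -> (e < idx r)%N /\ c e * c (idx r) < 0 & (e < n)%N].
  case: (leqP r S.+1) => hrS.
    have hv' : (a < idx r)%N by apply: hafter; rewrite leqnn hrS.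
    have hbv := ((hside _ hrS).2 hv').2.
    have hcv := hcnz _ hrS.
    have key : (0 < r)%N -> 0 < c (idx r.-1) * c (idx r).
      move=> hr0; have [hu1 hu2] := hu r hr0 (leqnn r) hr.
      have hp : (r.-1 < S.+1)%N by rewrite (leq_trans _ hrS) // prednK.
      have := hprod _ hp; rewrite prednK // => hp'.
      exact: (mixed _ _ hu1 hrS hu2 hv' hp').
    case: (ltP (c b * c (idx r)) 0) => hbc.
      exists b; split => //.
        move=> hr0; have [hu1 hu2] := hu r hr0 (leqnn r) hr.
        split; first by apply: leq_ltn_trans hu2 hab.
        by rewrite mulrC; apply: (sg1 hbc); rewrite mulrC; apply: key.
      move=> _; split => //; rewrite ltn_neqAle hbv andbT; apply/eqP => eb.
      by move: hbc; rewrite -eb sqn.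
    have hav : c a * c (idx r) < 0 := sg4 hcab hbc hcv.
    exists a; split => //; last exact: ltn_trans hab hbn.
    move=> hr0; have [hu1 hu2] := hu r hr0 (leqnn r) hr.
    have hua : c (idx r.-1) * c a < 0.
      rewrite mulrC; apply: (sg1 hav); rewrite mulrC; exact: key.
    split => //; rewrite ltn_neqAle hu2 andbT; apply/eqP => ea.
    by move: hua; rewrite ea sqn.
  have hr2 : r = S.+2 by apply/eqP; rewrite eqn_leq hr hrS.
  have hr0 : (0 < r)%N by rewrite hr2.
  have [hu1 hu2] := hu r hr0 (leqnn r) hr.
  have hcu := hcnz _ hu1.
  case: (ltP (c a * c (idx r.-1)) 0) => hau.
    exists a; split.
    - move=> _; split; last by rewrite mulrC.
      rewrite ltn_neqAle hu2 andbT; apply/eqP => ea.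
      by move: hau; rewrite ea sqn.
    - by [].
    - exact: ltn_trans hab hbn.
  have hba : c b * c a < 0 by rewrite mulrC.
  exists b; split.
  - move=> _; split; first by apply: leq_ltn_trans hu2 hab.
    by rewrite mulrC; apply: (sg4 hba hau hcu).
  - by [].
  - exact: hbn.
exists (fun j => if (j < r)%N then idx j else if j == r then e else idx j.-1).
have casej j : (j < S.+2)%N ->
  [\/ (j.+1 < r)%N /\ (j < S.+1)%N, j.+1 = r, j = r /\ (r <= S.+1)%N |
       [/\ (r < j)%N, (0 < j)%N, (j.-1 < S.+1)%N & (r <= j.-1)%N]].
  move=> hj; case: (ltngtP j.+1 r) => hjr.
  - by constructor 1; split => //; lia.
  - case: (ltngtP j r) => hj2.
    + lia.
    + constructor 4; split => //; lia.
    + by constructor 3; split => //; lia.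
  - by constructor 2.
split.
- move=> j hj /=; case: (casej j hj).
  + move=> [h1 h2]; rewrite h1 (ltnW h1); exact: hinc.
  + move=> h1; rewrite -h1 ltnSn ltnn eqxx; rewrite -h1 /= in E1; exact: (E1 isT).1.
  + move=> [-> h2]; rewrite ltnn eqxx.
    have -> : (r.+1 < r)%N = false by lia.
    have -> : (r.+1 == r) = false by lia.
    exact: (E2 h2).1.
  + move=> [h1 h2 h3 h4].
    have -> : (j < r)%N = false by lia.
    have -> : (j == r) = false by lia.
    have -> : (j.+1 < r)%N = false by lia.
    have -> : (j.+1 == r) = false by lia.
    rewrite /=.
    by have := hinc _ h3; rewrite prednK.
- have -> : (S.+2 < r)%N = false by lia.
  case: eqP => _; [exact: E3 | exact: hS].
- move=> j hj /=; case: (casej j hj).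
  + move=> [h1 h2]; rewrite h1 (ltnW h1).
    have [hb1 hb2] := hbefore _ (ltnW h1); have [hb3 hb4] := hbefore _ h1.
    exact: (pos2 _ _ hb1 hb3 hb2 hb4 (hprod _ h2)).
  + move=> h1; rewrite -h1 ltnSn ltnn eqxx; rewrite -h1 /= in E1; exact: (E1 isT).2.
  + move=> [-> h2]; rewrite ltnn eqxx.
    have -> : (r.+1 < r)%N = false by lia.
    have -> : (r.+1 == r) = false by lia.
    exact: (E2 h2).2.
  + move=> [h1 h2 h3 h4].
    have -> : (j < r)%N = false by lia.
    have -> : (j == r) = false by lia.
    have -> : (j.+1 < r)%N = false by lia.
    have -> : (j.+1 == r) = false by lia.
    rewrite /=.
    have hj' : j = (j.-1).+1 by rewrite prednK.
    have hA := hafter j.-1; rewrite h4 /= (ltnW h3) in hA.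
    have hB := hafter j; rewrite (ltnW h1) /= in hB.
    have hjS : (j <= S.+1)%N by rewrite hj' h3.
    rewrite hjS in hB.
    have := neg2 _ _ (ltnW h3) hjS (hA isT) (hB isT).
    rewrite {3 4}hj'; apply; exact: hprod.
Qed.


Lemma is_derive_lin (m x : R) :
  is_derive x 1 (fun t : R => m * t) m.
Proof.
have h := @is_deriveZ R R R id m x 1 1 (is_derive_id x 1).
by rewrite /GRing.scale /= mulr1 in h.
Qed.

Lemma is_derive_expRM (m x : R) :
  is_derive x 1 (fun t : R => expR (m * t)) (m * expR (m * x)).
Proof.
have d1 : derivable (fun t : R => m * t) x 1.
  by have := is_derive_lin m x => -[].
have d2 : derivable (@expR R) (m * x) 1 by apply: ex_derive.
have e : (fun t : R => expR (m * t)) = (@expR R) \o (fun t => m * t) by [].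
rewrite e.
apply: DeriveDef; first by apply/derivable1_diffP; apply: differentiable_comp; apply/derivable1_diffP.
rewrite -derive1E derive1_comp // !derive1E.
have -> : 'D_1 (@expR R) (m * x) = expR (m * x).
  by have := is_derive_expR (m * x) => -[_ ->].
have -> : 'D_1 (fun t : R => m * t) x = m.
  by have := is_derive_lin m x => -[_ ->].
by rewrite mulrC.
Qed.

Lemma is_derive_cexp (a m x : R) :
  is_derive x 1 (fun t : R => a * expR (m * t)) (a * (m * expR (m * x))).
Proof.
exact: (@is_deriveZ R R R (fun t => expR (m * t)) a x 1 _ (is_derive_expRM m x)).
Qed.

Definition F (n : nat) (c m : nat -> R) (t : R) := \sum_(k < n) c k * expR (m k * t).

Lemma F_shift n (c m : nat -> R) (mu t : R) : F n c (fun k => m k - mu) t = expR (- (mu * t)) * F n c m t.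
Proof.
rewrite /F mulr_sumr; apply: eq_bigr => k _.
by rewrite mulrBl expRD mulrA mulrC.
Qed.

Lemma F_derive n (c m : nat -> R) (x : R) : is_derive x 1 (F n c m) (F n (fun k => c k * m k) m x).
Proof.
have -> : F n c m = \sum_(k < n) (fun t => c k * expR (m k * t)).
  by rewrite fct_sumE.
have -> : F n (fun k => c k * m k) m x = \sum_(k < n) (c k * (m k * expR (m k * x))).
  by apply: eq_bigr => k _; rewrite mulrA.
apply: is_derive_sum => k; exact: is_derive_cexp.
Qed.

Lemma F_cont n (c m : nat -> R) : continuous (F n c m).
Proof.
move=> x; apply: differentiable_continuous; apply/derivable1_diffP.
by have := F_derive n c m x => -[].
Qed.

Lemma F_mvt n (c m : nat -> R) (a b : R) : a < b -> exists2 x, a < x < b &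
  F n c m b - F n c m a = F n (fun k => c k * m k) m x * (b - a).
Proof.
move=> ab; have hc : {within `[a, b], continuous (F n c m)}.
  by apply: continuous_subspaceT; exact: F_cont.
have [x hx h] := @MVT R (F n c m) (F n (fun k => c k * m k) m) a b ab
  (fun x _ => F_derive n c m x) hc.
by exists x => //; move: hx; rewrite in_itv.
Qed.


Definition wpat (f : R -> R) (T : nat) (e : R) (t : nat -> R) :=
  (forall j, (j < T)%N -> t j < t j.+1) /\
  (forall j, (j <= T)%N -> 0 <= (-1) ^+ j * e * f (t j)).

Lemma DS n (c m : nat -> R) T (e : R) t (mu : R) : e != 0 -> wpat (F n c m) T.+1 e t ->
  exists xi, [/\ wpat (F n (fun k => c k * (m k - mu)) (fun k => m k - mu)) T (- e) xi,
   (forall j, (j <= T)%N -> F n c m (t j) != 0 \/ F n c m (t j.+1) != 0 ->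
       F n (fun k => c k * (m k - mu)) (fun k => m k - mu) (xi j) != 0) &
   (forall j, (j <= T)%N -> t j < xi j < t j.+1)].
Proof.
move=> e0 [hinc hsg].
set G := F n c (fun k => m k - mu).
set G' := F n (fun k => c k * (m k - mu)) (fun k => m k - mu).
have hG x : G x = expR (- (mu * x)) * F n c m x by rewrite /G F_shift.
have := @choice nat R (fun j x => (j <= T)%N -> t j < x < t j.+1 /\
   G (t j.+1) - G (t j) = G' x * (t j.+1 - t j)).
case.
  move=> j; case: (leqP j T) => hj.
    have [x hx h] := F_mvt n c (fun k => m k - mu) _ _ (hinc j hj).
    by exists x => _.
  by exists 0 => h; lia.
move=> xi hxi.
exists xi; split.
- split.
    move=> j hj; have [h1 _] := hxi j (ltnW hj); have [h2 _] := hxi j.+1 hj.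
    move: h1 h2 => /andP[_ h1] /andP[h2 _]; exact: lt_trans h1 h2.
  move=> j hj; have [h1 h2] := hxi j hj.
  have s0 := hsg j (leq_trans hj (leqnSn _)); have s1 := hsg j.+1 hj.
  move: h1 => /andP[h1 h1'].
  have hd : 0 < t j.+1 - t j by rewrite subr_gt0; exact: lt_trans h1 h1'.
  have E0 := expR_gt0 (- (mu * t j)); have E1 := expR_gt0 (- (mu * t j.+1)).
  rewrite exprS in s1.
  have g0 : 0 <= (-1) ^+ j * e * G (t j) by rewrite hG mulrCA; apply: mulr_ge0 => //; exact: ltW.
  have g1 : 0 <= - ((-1) ^+ j * e) * G (t j.+1).
    by rewrite hG mulrCA; apply: mulr_ge0; [exact: ltW | rewrite mulN1r mulNr in s1].
  have key : 0 <= - ((-1) ^+ j * e) * (G' (xi j) * (t j.+1 - t j)).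
    rewrite -h2 mulrBr; lra.
  rewrite mulrA pmulr_lge0 // in key.
  by rewrite mulrN.
- move=> j hj hnz; apply/negP => /eqP h0.
  have [_ h2] := hxi j hj; rewrite h0 mul0r in h2.
  have s0 := hsg j (leq_trans hj (leqnSn _)); have s1 := hsg j.+1 hj.
  rewrite exprS mulN1r mulNr in s1.
  set s := (-1) ^+ j * e in s0 s1.
  have sn : s != 0 by rewrite mulf_neq0 // signr_eq0.
  have eq1 : G (t j) = G (t j.+1) by apply/eqP; rewrite eq_sym -subr_eq0 h2.
  have E0 := expR_gt0 (- (mu * t j)); have E1 := expR_gt0 (- (mu * t j.+1)).
  have a0 : 0 <= s * G (t j) by rewrite hG mulrCA; apply: mulr_ge0 => //; exact: ltW.
  have a1 : s * G (t j) <= 0.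
    by rewrite eq1 hG mulrCA -oppr_ge0 -mulrN; apply: mulr_ge0; [exact: ltW | rewrite -mulNr].
  have : s * G (t j) = 0 by apply/eqP; rewrite eq_le a0 a1.
  move/eqP; rewrite mulf_eq0 (negbTE sn) /= => /eqP g0.
  have g1 : G (t j.+1) = 0 by rewrite -eq1.
  move: g0 g1; rewrite !hG => /eqP; rewrite mulf_eq0 gt_eqF //= => /eqP f0.
  move/eqP; rewrite mulf_eq0 gt_eqF //= => /eqP f1.
  by case: hnz; rewrite ?f0 ?f1 eqxx.
- by move=> j hj; have [] := hxi j hj.
Qed.

Lemma F_allsame n (c m : nat -> R) :
  (forall k l, (k < n)%N -> (l < n)%N -> 0 <= c k * c l) ->
  (forall x y, 0 <= F n c m x * F n c m y) /\
  (forall x, F n c m x = 0 -> forall k, (k < n)%N -> c k = 0).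
Proof.
move=> hp; split.
  move=> x y; rewrite /F mulr_suml; apply: sumr_ge0 => k _.
  rewrite mulr_sumr; apply: sumr_ge0 => l _.
  have := hp k l (ltn_ord k) (ltn_ord l).
  have := expR_gt0 (m k * x); have := expR_gt0 (m l * y).
  move=> h1 h2 h3.
  have -> : c k * expR (m k * x) * (c l * expR (m l * y)) =
    (c k * c l) * (expR (m k * x) * expR (m l * y)) by rewrite mulrACA.
  by apply: mulr_ge0 => //; apply: mulr_ge0; exact: ltW.
move=> x hx l hl.
have h0 : c l * F n c m x = 0 by rewrite hx mulr0.
move: h0; rewrite /F mulr_sumr => h0.
have hnn : forall k : 'I_n, true -> 0 <= c l * (c k * expR (m k * x)).
  move=> k _; rewrite mulrA; apply: mulr_ge0; first exact: hp.
  exact: ltW (expR_gt0 _).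
have := psumr_eq0P hnn h0 (i:=Ordinal hl) isT.
rewrite /= mulrA => /eqP; rewrite mulf_eq0 (gt_eqF (expR_gt0 _)) orbF mulf_eq0 orbb.
by move/eqP.
Qed.

Lemma SC n (c m : nat -> R) T (e : R) (t : nat -> R) j : e != 0 -> wpat (F n c m) T e t -> (j < T)%N ->
  F n c m (t j) != 0 \/ F n c m (t j.+1) != 0 ->
  exists k l, [/\ (k < l)%N, (l < n)%N & c k * c l < 0].
Proof.
move=> e0 [_ hsg] hj hnz.
case: (pselect (exists k l, [/\ (k < l)%N, (l < n)%N & c k * c l < 0])) => // hno.
exfalso.
have hp : forall k l, (k < n)%N -> (l < n)%N -> 0 <= c k * c l.
  move=> k l hk hl; case: (ltngtP k l) => hkl.
  - by rewrite leNgt; apply/negP => h; apply: hno; exists k, l.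
  - by rewrite mulrC leNgt; apply/negP => h; apply: hno; exists l, k.
  - by rewrite hkl -expr2 sqr_ge0.
have [hprod hzero] := F_allsame n c m hp.
have s0 := hsg j (ltnW hj); have s1 := hsg j.+1 hj.
rewrite exprS mulN1r mulNr in s1.
set s := (-1) ^+ j * e in s0 s1.
have sn : s != 0 by rewrite mulf_neq0 // signr_eq0.
set u := F n c m (t j) in s0 hnz; set v := F n c m (t j.+1) in s1 hnz.
have huv : 0 <= u * v by apply: hprod.
have s2 : 0 < s * s by rewrite lt_def sqr_ge0 andbT mulf_neq0.
have : u * v = 0.
  apply/eqP; rewrite eq_le huv andbT; nra.
move/eqP; rewrite mulf_eq0 => /orP [] /eqP h0.
- have := hzero _ h0 => hz.
  have fz : forall y, F n c m y = 0.
    move=> y; rewrite /F big1 // => k _; rewrite hz //.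
    by rewrite mul0r.
  by case: hnz; rewrite /u /v !fz eqxx.
- have := hzero _ h0 => hz.
  have fz : forall y, F n c m y = 0.
    move=> y; rewrite /F big1 // => k _; rewrite hz //.
    by rewrite mul0r.
  by case: hnz; rewrite /u /v !fz eqxx.
Qed.

Lemma consec n (c : nat -> R) d : forall k l, (l - k <= d)%N -> (k < l)%N -> (l < n)%N ->
  c k * c l < 0 ->
  exists a b, [/\ (a < b)%N, (b < n)%N, c a * c b < 0 & forall q, (a < q < b)%N -> c q = 0].
Proof.
elim: d => [|d IH] k l hd hkl hln hc.
  lia.
case: (pselect (exists q, (k < q < l)%N /\ c q != 0)) => [[q [hq cq]]|hno].
  move: hq => /andP[hkq hql].
  case: (ltP (c k * c q) 0) => hkq'.
    apply: (IH k q) => //; [lia | exact: ltn_trans hql hln].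
  apply: (IH q l) => //; first lia.
  have h1 : c l * c k < 0 by rewrite mulrC.
  by rewrite mulrC; exact: (sg4 h1 hkq' cq).
exists k, l; split => // q hq; case: (eqVneq (c q) 0) => // h.
by exfalso; apply: hno; exists q; split.
Qed.

Definition nonincr n (m : nat -> R) := forall k l, (k <= l)%N -> (l < n)%N -> m l <= m k.

Lemma descartes T : (0 < T)%N -> forall n (c m : nat -> R) (e : R) (t : nat -> R), e != 0 -> nonincr n m ->
  wpat (F n c m) T e t ->
  (forall j, (j < T)%N -> F n c m (t j) != 0 \/ F n c m (t j.+1) != 0) ->
  altc n c T.
Proof.
elim: T => // T IH _ n c m e t e0 hm hw hnz.
have [k [l [hkl hln hc]]] := @SC n c m _ e t 0%N e0 hw (ltn0Sn T) (hnz 0%N (ltn0Sn T)).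
case: T IH hw hnz => [|T] IH hw hnz.
  exists (fun j => if j == 0%N then k else l); split => //.
  - by case.
  - by case.
have [a [b [hab hbn hcab hmid]]] := @consec n c (l - k) k l (leqnn _) hkl hln hc.
pose mu := (m a + m b) / 2.
have hmab : m b <= m a by apply: hm => //; exact: ltnW.
have [xi [hw' hnz' _]] := @DS n c m T.+1 e t mu e0 hw.
have := IH isT n (fun k => c k * (m k - mu)) (fun k => m k - mu) (- e) xi.
move=> /(_ _ _ hw' _) h.
apply: (@comb n c (fun k => m k - mu) a b _ hab hbn hcab hmid).
- move=> q hq; rewrite subr_ge0; apply: le_trans (hm _ _ hq (ltn_trans hab hbn)).
  by rewrite /mu; lra.
- move=> q /andP[hq1 hq2]; rewrite subr_le0; apply: le_trans (hm _ _ hq1 hq2) _.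
  by rewrite /mu; lra.
apply: h.
- by rewrite oppr_eq0.
- by move=> k1 l1 h1 h2; rewrite lerB // hm.
- move=> j hj; left; apply: hnz'; first exact: ltnW.
  by apply: hnz; lia.
Qed.

Lemma final_count n (c m : nat -> R) T (e : R) (t : nat -> R) : nonincr n m -> e != 0 ->
  (0 < T)%N -> wpat (F n c m) T.+1 e t ->
  (forall j, (0 < j)%N -> (j < T.+1)%N -> F n c m (t j) != 0 \/ F n c m (t j.+1) != 0) ->
  altc n c T.+1.
Proof.
move=> hm e0 hT hw hnz.
case: (pselect (F n c m (t 0%N) != 0 \/ F n c m (t 1%N) != 0)) => h0.
  apply: (@descartes T.+1 isT n c m e t e0 hm hw) => j hj.
  by case: (posnP j) => [->|hj0] //; apply: hnz.
have [k [l [hkl hln hc]]] := @SC n c m _ e t 1%N e0 hw (hT) (hnz 1%N isT hT).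
have [a [b [hab hbn hcab hmid]]] := @consec n c (l - k) k l (leqnn _) hkl hln hc.
pose mu := (m a + m b) / 2.
have hmab : m b <= m a by apply: hm => //; exact: ltnW.
have [xi [hw' hnz' _]] := @DS n c m T e t mu e0 hw.
apply: (@comb n c (fun k => m k - mu) a b _ hab hbn hcab hmid).
- move=> q hq; rewrite subr_ge0; apply: le_trans (hm _ _ hq (ltn_trans hab hbn)).
  by rewrite /mu; lra.
- move=> q /andP[hq1 hq2]; rewrite subr_le0; apply: le_trans (hm _ _ hq1 hq2) _.
  by rewrite /mu; lra.
apply: (@descartes T hT n _ _ (- e) xi _ _ hw').
- by rewrite oppr_eq0.
- by move=> k1 l1 h1 h2; rewrite lerB // hm.
- move=> j hj; right; apply: hnz'; first exact: hj.
  by apply: hnz; lia.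
Qed.




Lemma sg4'' (x y z : R) : x * y < 0 -> 0 <= y * z -> z != 0 -> x * z < 0.
Proof.
move=> h1 h2 hz; have hy : y != 0 by apply/eqP=> y0; move: h1; rewrite y0 mulr0 ltxx.
have : 0 < y * z by rewrite lt_neqAle h2 andbT eq_sym mulf_neq0.
nra.
Qed.

Fixpoint scf (x : R) (s : seq R) : nat :=
  match s with
  | [::] => 0%N
  | y :: s' => if y == 0 then scf x s' else addn (x * y < 0)%R (scf y s')
  end.

Lemma scf_count (x : R) s : scf x s =
  count (fun p : R * R => p.1 * p.2 < 0)
    (zip (x :: [seq y <- s | y != 0]) [seq y <- s | y != 0]).
Proof.
elim: s x => [|y s IH] x //=.
by case: eqP => _ /=; rewrite IH.
Qed.

Lemma sign_changes_scf (s : seq R) : sign_changes s = scf 0 s.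
Proof.
rewrite /sign_changes scf_count.
case: [seq y <- s | y != 0] => [|y f] //=.
by rewrite mul0r ltxx.
Qed.

Lemma scf_chain (s : seq R) : forall (x : R) S (idx : nat -> nat),
  (forall j, (j < S)%N -> (idx j < idx j.+1)%N) -> (idx S < size s)%N ->
  (forall j, (j < S)%N -> nth 0 s (idx j) * nth 0 s (idx j.+1) < 0) ->
  (addn (x * nth 0 s (idx 0) < 0)%R S <= scf x s)%N.
Proof.
elim: s => [|y s IH] x S idx hinc hS hprod.
  by rewrite /= ltn0 in hS.
have mono : forall i j, (i <= j <= S)%N -> (idx i <= idx j)%N.
  move=> i j /andP[hij hjS]; elim: j hij hjS => [|j IHj] hij hjS.
    by rewrite leqn0 in hij; rewrite (eqP hij).
  case: (ltngtP i j.+1) hij => // [hlt _|-> //].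
  by apply: leq_trans (IHj _ (ltnW hjS)) (ltnW (hinc _ hjS)).
case: (posnP (idx 0)) => h0.
- rewrite h0 /=.
  case: S hinc hS hprod mono => [|S] hinc hS hprod mono.
    by case: eqP => [->|_]; rewrite ?mulr0 ?ltxx //= addn0 leq_addr.
  have hy : y != 0.
    by have := hprod 0%N isT; rewrite h0 /=; apply: contraTneq => ->; rewrite mul0r ltxx.
  rewrite (negbTE hy).
  have hpos j : (j <= S)%N -> (0 < idx j.+1)%N.
    move=> hj; have := hinc 0%N isT; have := mono 1%N j.+1; lia.
  have := IH y S (fun j => (idx j.+1).-1).
  have nthE j : (j <= S)%N -> nth 0 s (idx j.+1).-1 = nth 0 (y :: s) (idx j.+1).
    by move=> hj; have := hpos j hj; case: (idx j.+1).
  have hp0 : y * nth 0 (y :: s) (idx 1%N) < 0 by have := hprod 0%N isT; rewrite h0.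
  rewrite nthE // hp0 => IH'.
  have : (S < scf y s)%N.
    apply: IH'.
    - move=> j hj; have := hinc j.+1 hj; have := hpos j (ltnW hj); lia.
    - move: hS => /=; have := hpos S (leqnn S); lia.
    - by move=> j hj; rewrite !nthE //; [exact: hprod | exact: ltnW].
  case: (x * y < 0) => /=; lia.
- have hpos j : (j <= S)%N -> (0 < idx j)%N.
    move=> hj; have := mono 0%N j; rewrite leq0n hj /= => /(_ isT) h; exact: leq_trans h0 h.
  have nthE j : (j <= S)%N -> nth 0 s (idx j).-1 = nth 0 (y :: s) (idx j).
    by move=> hj; have := hpos j hj; case: (idx j).
  have hc : forall x', (addn (x' * nth 0 (y :: s) (idx 0) < 0)%R S <= scf x' s)%N.
    move=> x'; rewrite -nthE //; apply: (IH x' S (fun j => (idx j).-1)).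
    - move=> j hj; have := hinc j hj; have := hpos j (ltnW hj); lia.
    - move: hS => /=; have := hpos S (leqnn S); lia.
    - by move=> j hj; rewrite !nthE //; [exact: hprod | exact: ltnW].
  rewrite /=; case: eqP => [_|/eqP hy]; first exact: hc.
  have := hc y; set v := nth 0 (y :: s) (idx 0).
  case: (ltP (x * v) 0) => hxv /=; last by lia.
  case: (ltP (x * y) 0) => hxy /=; first by lia.
  have : y * v < 0.
    have h1 : v * x < 0 by rewrite mulrC.
    by rewrite mulrC; exact: (sg4'' _ _ _ h1 hxy hy).
  by move=> -> /=; lia.
Qed.



Lemma entry_UDU n (U : 'M[R]_n) (d : 'I_n -> R) i j :
  (U *m diag_mx (\row_k d k) *m U^T) i j = \sum_(k < n) U i k * U j k * d k.
Proof.
rewrite mul_mx_diag !mxE; apply: eq_bigr => k _; rewrite !mxE.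
by rewrite mulrAC.
Qed.

Lemma diag_mul n (d1 d2 : 'I_n -> R) :
  diag_mx (\row_k d1 k) *m diag_mx (\row_k d2 k) = diag_mx (\row_k (d1 k * d2 k)).
Proof.
apply/matrixP => a b; rewrite mul_mx_diag !mxE.
by case: eqP => [->|_]; rewrite ?mulr1n ?mulr0n ?mul0r.
Qed.

Lemma pow_entry_ge0 n (A U : 'M[R]_n) (lam : 'I_n -> R) (i j : 'I_n) :
  (forall a b, 0 <= A a b) -> U^T *m U = 1%:M -> U *m U^T = 1%:M ->
  A = U *m diag_mx (\row_k lam k) *m U^T ->
  forall N, 0 <= \sum_(k < n) U i k * U j k * lam k ^+ N.
Proof.
move=> hA hUtU hUUt hAe.
pose P N := U *m diag_mx (\row_k lam k ^+ N) *m U^T.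
have PS N : P N.+1 = P N *m A.
  rewrite /P hAe !mulmxA -[U *m _ *m U^T *m U]mulmxA hUtU mulmx1.
  rewrite -[U *m _ *m diag_mx _]mulmxA diag_mul.
  by congr (_ *m diag_mx _ *m _); apply/matrixP => a b; rewrite !mxE exprSr.
have Pge N : forall a b, 0 <= P N a b.
  elim: N => [|N IH] a b.
    rewrite /P entry_UDU.
    have -> : \sum_(k < n) U a k * U b k * lam k ^+ 0 = (U *m U^T) a b.
      by rewrite !mxE; apply: eq_bigr => k _; rewrite expr0 mulr1 !mxE.
    by rewrite hUUt mxE; case: eqP.
  rewrite PS mxE; apply: sumr_ge0 => k _; apply: mulr_ge0; [exact: IH | exact: hA].
move=> N; have := Pge N i j; by rewrite /P entry_UDU.
Qed.

Lemma lam_pos n (A U : 'M[R]_n) (lam : 'I_n -> R) :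
  (forall x : 'cV[R]_n, 0 <= (x^T *m A *m x) ord0 ord0) -> A \in unitmx ->
  U^T *m U = 1%:M -> A = U *m diag_mx (\row_k lam k) *m U^T -> forall k, 0 < lam k.
Proof.
move=> hpsd hinv hUtU hAe k.
pose e : 'cV[R]_n := delta_mx k ord0.
pose x := U *m e.
have De : diag_mx (\row_k lam k) *m e = lam k *: e.
  apply/matrixP => a b; rewrite mul_diag_mx !mxE.
  by case: (eqVneq a k) => [->|hne] //=; rewrite ?mulr0 ?mulr1 //= mulr0.
have UtX : U^T *m x = e by rewrite /x mulmxA hUtU mul1mx.
have Ax : A *m x = lam k *: x.
  by rewrite hAe -!mulmxA UtX De /x scalemxAr.
have ete : (e^T *m e) ord0 ord0 = 1.
  by rewrite /e trmx_delta mul_delta_mx mxE !eqxx.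
have xtx : (x^T *m x) ord0 ord0 = 1 by rewrite /x trmx_mul -mulmxA (mulmxA U^T) hUtU mul1mx ete.
have q : (x^T *m A *m x) ord0 ord0 = lam k.
  by rewrite -mulmxA Ax -scalemxAr mxE xtx mulr1.
have lk0 := hpsd x; rewrite q in lk0.
rewrite lt_neqAle lk0 andbT eq_sym; apply/eqP => l0.
have : x = 0.
  by rewrite -(mul1mx x) -(mulVmx hinv) -mulmxA Ax l0 scale0r mulmx0.
move=> x0; have e0 : e = 0 by rewrite -UtX x0 mulmx0.
move: ete; rewrite e0 mulmx0 mxE => /eqP.
by rewrite eq_sym oner_eq0.
Qed.



Lemma card_cmp T (C : set T) K : ~ (C #<= `I_K)%card -> (`I_K.+1 #<= C)%card.
Proof.
move=> hno; case: (pselect (finite_set C)) => hfin.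
  have [m hm] := (finite_setP C).1 hfin.
  case: (leqP m K) => hmK.
    by exfalso; apply: hno; rewrite (card_le_eql hm) card_le_II.
  by rewrite (card_le_eqr hm) card_le_II.
have := (infiniteP C).1 hfin.
exact: card_le_trans (card_leT _).
Qed.

Lemma points_chain (f : R -> R) N' : (0 < N')%N ->
  (`I_N' #<= components [set t : R | 1 < t /\ f t < 0])%card ->
  f 0 = 0 -> (forall N : nat, 0 <= f N%:R) -> 
  exists tp, wpat f (N'.*2.+1) (-1) tp /\
   (forall j, (0 < j)%N -> (j < N'.*2.+1)%N -> f (tp j) != 0 \/ f (tp j.+1) != 0).
Proof.
set Tm := [set t : R | 1 < t /\ f t < 0].
move=> hN hcard f0 fnat.
have /pcard_leP/injfunPex [g gfun ginj] := hcard.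
have : forall q, exists x, (q < N')%N -> Tm x /\ g q = connected_component Tm x.
  move=> q; case: (ltnP q N') => hq; last by exists 0.
  have [x hx ->] := gfun q hq.
  by exists x.
case/choice => pts hpts.
have pinj : {in iota 0 N' &, injective pts}.
  move=> a b; rewrite !mem_iota /= !add0n => ha hb e.
  apply: ginj; rewrite ?in_setE //.
  by rewrite (hpts a ha).2 (hpts b hb).2 e.
pose sp := sort <=%R [seq pts q | q <- iota 0 N'].
have hsz : size sp = N' by rewrite size_sort size_map size_iota.
have usp : uniq sp by rewrite sort_uniq map_inj_in_uniq // iota_uniq.
have ssp : sorted <%R sp by rewrite lt_sorted_uniq_le usp sort_le_sorted.
pose sP p := nth 0 sp p.
have hmem p : (p < N')%N -> exists2 q, (q < N')%N & sP p = pts q.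
  move=> hp; have : sP p \in sp by rewrite mem_nth // hsz.
  rewrite mem_sort => /mapP [q]; rewrite mem_iota /= add0n => hq ->.
  by exists q.
have sPinc p p' : (p < p')%N -> (p' < N')%N -> sP p < sP p'.
  move=> h1 h2; apply: (sorted_ltn_nth lt_trans) => //; rewrite inE hsz //.
  exact: ltn_trans h1 h2.
have sPT p : (p < N')%N -> Tm (sP p).
  by move=> hp; have [q hq ->] := hmem p hp; exact: (hpts q hq).1.
have sPcc p p' : (p < p')%N -> (p' < N')%N ->
    connected_component Tm (sP p) <> connected_component Tm (sP p').
  move=> h1 h2 e.
  have [q hq eq] := hmem p (ltn_trans h1 h2); have [q' hq' eq'] := hmem p' h2.
  have : q = q'.
    apply: ginj; rewrite ?in_setE //.
    by rewrite (hpts q hq).2 (hpts q' hq').2 -eq -eq'.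
  move=> qq; have := sPinc p p' h1 h2; by rewrite eq eq' qq ltxx.
have sep p : (p.+1 < N')%N -> exists r, sP p < r < sP p.+1 /\ 0 <= f r.
  move=> hp; case: (pselect (exists r, sP p < r < sP p.+1 /\ 0 <= f r)) => // hno.
  exfalso; apply: (sPcc p p.+1 (ltnSn p) hp).
  apply: same_connected_component.
  have hsub : `[sP p, sP p.+1] `<=` Tm.
    move=> y; rewrite /= in_itv /= => /andP[h1 h2].
    case: (eqVneq y (sP p)) => [->|hy1]; first exact: sPT (ltnW hp).
    case: (eqVneq y (sP p.+1)) => [->|hy2]; first exact: sPT hp.
    have l1 : sP p < y by rewrite lt_def hy1 h1.
    have l2 : y < sP p.+1 by rewrite lt_def eq_sym hy2 h2.
    split; first by apply: lt_trans l1; exact: (sPT p (ltnW hp)).1.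
    rewrite ltNge; apply/negP => fy; apply: hno; exists y; split => //.
    by rewrite l1 l2.
  have : `[sP p, sP p.+1] `<=` connected_component Tm (sP p).
    apply: connected_component_max => //; last exact: segment_connected.
    by rewrite /= in_itv /= lexx ltW // sPinc.
  apply; by rewrite /= in_itv /= lexx ltW // sPinc.
have : forall p, exists r, (p.+1 < N')%N -> sP p < r < sP p.+1 /\ 0 <= f r.
  move=> p; case: (ltnP p.+1 N') => hp; last by exists 0.
  by have [r hr] := sep p hp; exists r.
case/choice => rr hrr.
pose x0 := sP N'.-1.
have hx0 : 0 <= x0.
  apply: ltW; apply: lt_trans _ (sPT _ _).1; first exact: ltr01.
  by rewrite prednK.
pose N0 := Num.Def.archi_bound x0.
have hN0 := archi_boundP hx0.
pose tp j := if j == 0%N then 0 else if j == 1%N then 1 else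
  if j == N'.*2.+1 then (N0%:R : R) else if odd j then rr ((j - 3)./2) else sP ((j - 2)./2).
have tp0 : tp 0%N = 0 by [].
have tp1 : tp 1%N = 1 by [].
have tpE p : (p < N')%N -> tp (p.*2.+2) = sP p.
  move=> hp; rewrite /tp.
  have -> : (p.*2.+2 == 0%N) = false by lia.
  have -> : (p.*2.+2 == 1%N) = false by lia.
  have -> : (p.*2.+2 == N'.*2.+1) = false by lia.
  have -> : odd p.*2.+2 = false by lia.
  by congr sP; lia.
have tpO p : (p.+1 < N')%N -> tp (p.*2.+3) = rr p.
  move=> hp; rewrite /tp.
  have -> : (p.*2.+3 == 0%N) = false by lia.
  have -> : (p.*2.+3 == 1%N) = false by lia.
  have -> : (p.*2.+3 == N'.*2.+1) = false by lia.
  have -> : odd p.*2.+3 = true by lia.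
  by congr rr; lia.
have tpL : tp N'.*2.+1 = N0%:R.
  rewrite /tp.
  have -> : (N'.*2.+1 == 0%N) = false by lia.
  have -> : (N'.*2.+1 == 1%N) = false by lia.
  by rewrite eqxx.
have cls j : (j <= N'.*2.+1)%N -> j = 0%N \/ j = 1%N \/
    (exists p, (p < N')%N /\ j = p.*2.+2) \/
    (exists p, (p.+1 < N')%N /\ j = p.*2.+3) \/ j = N'.*2.+1.
  move=> hj; case: (ltnP j 2) => hj2.
    by case: j hj hj2 => [|[|]] //= _ _; [left | right; left].
  case: (eqVneq j N'.*2.+1) => hjl; first by do 4 right.
  case hodd: (odd j).
    do 3 right; left; exists ((j - 3)./2); lia.
  do 2 right; left; exists ((j - 2)./2); lia.
have fsP p : (p < N')%N -> f (sP p) < 0 by move=> hp; exact: (sPT p hp).2.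
exists tp; split; first split.
- move=> j hj; case: (cls j (ltnW hj)) => [|[|[|[|]]]].
  + by move=> ->; rewrite tp0 tp1 ltr01.
  + move=> ->; rewrite tp1; have -> : 2%N = 0.*2.+2 by [].
    rewrite tpE //; exact: (sPT 0%N hN).1.
  + move=> [p [hp ->]]; rewrite tpE //.
    case: (eqVneq p N'.-1) => hpl.
      have -> : p.*2.+3 = N'.*2.+1 by lia.
      by rewrite tpL /sP hpl.
    have hp1 : (p.+1 < N')%N by lia.
    by rewrite tpO //; have := hrr p hp1 => -[/andP[]].
  + move=> [p [hp ->]]; have -> : p.*2.+4 = p.+1.*2.+2 by lia.
    rewrite tpO // tpE //; by have := hrr p hp => -[/andP[]].
  + by move=> hjl; rewrite hjl ltnn in hj.
- move=> j hj; case: (cls j hj) => [|[|[|[|]]]].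
  + by move=> ->; rewrite tp0 f0 mulr0.
  + by move=> ->; rewrite tp1 expr1 mulrNN !mul1r; have := fnat 1%N; rewrite mulr1n.
  + move=> [p [hp ->]]; rewrite tpE // -signr_odd.
    have -> : odd p.*2.+2 = false by lia.
    rewrite expr0 mul1r mulN1r oppr_ge0; exact: ltW (fsP p hp).
  + move=> [p [hp ->]]; rewrite tpO // -signr_odd.
    have -> : odd p.*2.+3 = true by lia.
    by rewrite expr1 mulrNN !mul1r; have := hrr p hp => -[].
  + move=> ->; rewrite tpL -signr_odd.
    have -> : odd N'.*2.+1 = true by lia.
    by rewrite expr1 mulrNN !mul1r; exact: fnat.
- move=> j hj0 hj; case: (cls j (ltnW hj)) => [|[|[|[|]]]].
  + by move=> h; rewrite h in hj0.
  + move=> ->; right; have -> : 2%N = 0.*2.+2 by [].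
    by rewrite tpE // lt_eqF // fsP.
  + by move=> [p [hp ->]]; left; rewrite tpE // lt_eqF // fsP.
  + move=> [p [hp ->]]; right; have -> : p.*2.+4 = p.+1.*2.+2 by lia.
    by rewrite tpE // lt_eqF // fsP.
  + by move=> hjl; rewrite hjl ltnn in hj.
Qed.
End Aux.

Theorem lemma2p4 (R : realType) (n : nat) (A : 'M[R]_n)
  (U : 'M[R]_n) (lam : 'I_n -> R) (i j : 'I_n) :
  doubly_nonnegative A ->
  A \in unitmx ->
  U *m U^T = 1%:M ->
  (forall k l : 'I_n, (k <= l)%N -> lam l <= lam k) ->
  A = U *m diag_mx (\row_k lam k) *m U^T ->
  let w := sign_change_entry U i j in
  let Tm := [set t : R | 1 < t /\ mxpowR_entry U lam t i j < 0] in
  ((0 < w)%N -> (components Tm #<= `I_((w - 1)./2))%card) /\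
  (w = 0%N -> (components Tm #<= `I_0)%card).
Proof.
move=> hdnn hinv hUUt hlam hAe w Tm.
case: hdnn => hsym hpsd hnn.
have hUtU : U^T *m U = 1%:M := mulmx1C hUUt.
have lpos := @lam_pos R n A U lam hpsd hinv hUtU hAe.
pose s := [seq U i k * U j k | k <- enum 'I_n].
pose c := fun k : nat => nth 0 s k.
pose m := fun k : nat => nth 0 [seq ln (lam k) | k <- enum 'I_n] k.
have cE (k : 'I_n) : c k = U i k * U j k.
  by rewrite /c (nth_map k) ?size_enum_ord ?ltn_ord // nth_ord_enum.
have mE (k : 'I_n) : m k = ln (lam k).
  by rewrite /m (nth_map k) ?size_enum_ord ?ltn_ord // nth_ord_enum.
have hF t : mxpowR_entry U lam t i j = F R n c m t.
  rewrite /mxpowR_entry /F; apply: eq_bigr => k _.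
  by rewrite cE mE /powR gt_eqF ?lpos // [t * _]mulrC.
have hnat (N : nat) : 0 <= mxpowR_entry U lam N%:R i j.
  rewrite /mxpowR_entry.
  under eq_bigr => k _ do rewrite powR_mulrn ?ltW ?lpos //.
  exact: (@pow_entry_ge0 R n A U lam i j hnn hUtU hUUt hAe N).
have hm : nonincr R n m.
  move=> k l hkl hln; have hkn : (k < n)%N by exact: leq_ltn_trans hkl hln.
  rewrite (mE (Ordinal hkn)) (mE (Ordinal hln)) ler_ln ?posrE ?lpos //.
  by apply: hlam.
have hsz : size s = n by rewrite size_map size_enum_ord.
have key : forall N, (`I_N.+1 #<= components Tm)%card -> (N.+1.*2.+1 <= w)%N.
  move=> N hc.
  case: (eqVneq i j) => hij.
    exfalso.
    have e : components Tm = set0.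
      apply/seteqP; split => // C [x [_ hx] _]; exfalso; move: hx; apply/negP.
      rewrite -leNgt /mxpowR_entry -hij; apply: sumr_ge0 => k _.
      by rewrite -expr2; apply: mulr_ge0; [exact: sqr_ge0 | exact: powR_ge0].
    move: hc; rewrite e => /card_le0P h.
    have : (`I_N.+1 : set nat) 0%N by [].
    by rewrite h.
  have f0 : mxpowR_entry U lam 0 i j = 0.
    rewrite /mxpowR_entry.
    under eq_bigr => k _ do rewrite powRr0 mulr1.
    have e1 : \sum_(k < n) U i k * U j k = (U *m U^T) i j.
      by rewrite mxE; apply: eq_bigr => k _; rewrite mxE.
    by rewrite e1 hUUt mxE (negbTE hij).
  have [tp [hw hnz]] := @points_chain R (fun t => mxpowR_entry U lam t i j) N.+1 isT hc f0 hnat.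
  have hfe : (fun t => mxpowR_entry U lam t i j) = F R n c m by apply/funext => t; exact: hF.
  rewrite hfe in hw.
  have hnz' : forall j0, (0 < j0)%N -> (j0 < N.+1.*2.+1)%N ->
      F R n c m (tp j0) != 0 \/ F R n c m (tp j0.+1) != 0.
    by move=> j0 a b; rewrite -!hF; exact: hnz.
  clear hnz; rename hnz' into hnz.
  have e0 : (-1 : R) != 0 by rewrite oppr_eq0 oner_eq0.
  have [idx [hinc hS hprod]] := @final_count R n c m (N.+1.*2) (-1) tp hm e0 isT hw hnz.
  have hS' : (idx N.+1.*2.+1 < size s)%N by rewrite hsz.
  have := @scf_chain R s 0 _ idx hinc hS' hprod.
  by rewrite mul0r ltxx add0n -sign_changes_scf.
split => [hw0|hw0].
  case: (pselect (components Tm #<= `I_((w - 1)./2))%card) => // hno.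
  have := key _ (@card_cmp _ _ _ hno); lia.
case: (pselect (components Tm #<= `I_0)%card) => // hno.
have := key _ (@card_cmp _ _ _ hno); lia.
Qed.
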